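(* Let $k\ge 2$ and $n\ge k+1$ be integers. The minimum of ${\rm cc}(G)$ over all $k$-connected graphs $G$ of order $n$ equals $\min\{n,3k\}$. That is, every $k$-connected graph $G$ of order $n$ satisfies ${\rm cc}(G)\ge \min\{n,3k\}$, and some $k$-connected graph of order $n$ attains equality.
   Context: All graphs are finite and simple. A cummerbund of a graph is a longest cycle in it. The cummerbund covering number ${\rm cc}(G)$ is the number of vertices of $G$ that lie in at least one cummerbund. *)

(* Defs.v *)
From mathcomp Require Import all_boot.
From mathcomp Require Import boolp.

Set Implicit Arguments.
Unset Strict Implicit.
Unset Printing Implicit Defensive.

Definition simple_graph (T : finType) (e : rel T) : Prop :=
  irreflexive e /\ symmetric e.

Definition connected_outside (T : finType) (e : rel T) (X : {set T}) : Prop :=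
  forall u v : T, u \notin X -> v \notin X ->
    connect (fun x y => [&& e x y, x \notin X & y \notin X]) u v.

Definition k_connected (T : finType) (e : rel T) (k : nat) : Prop :=
  k < #|T| /\ forall X : {set T}, #|X| < k -> connected_outside e X.

Definition is_cycle (T : finType) (e : rel T) (c : seq T) : Prop :=
  ucycle e c /\ 3 <= size c.

Definition cummerbund (T : finType) (e : rel T) (c : seq T) : Prop :=
  is_cycle e c /\ forall c' : seq T, is_cycle e c' -> size c' <= size c.

Definition cc (T : finType) (e : rel T) : nat :=
  #|[set v : T | `[< exists c : seq T, cummerbund e c /\ v \in c >]]|.

(* Main.v *)
Require Import Defs.
From mathcomp Require Import all_boot.
From mathcomp Require Import boolp.
From mathcomp Require Import zify.
Set Implicit Arguments.
Unset Strict Implicit.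
Unset Printing Implicit Defensive.


Section Generic.
Variable T : finType.

Lemma exitP (r : rel T) (P : pred T) x y : connect r x y -> P x -> ~~ P y ->
  exists u v, [/\ connect [rel a b | [&& r a b, P a & P b]] x u, P u, r u v & ~~ P v].
Proof.
move=> /connectP[p pp ->]; elim: p x pp => [|z p IH] x /=.
  by move=> _ ->.
case/andP=> rxz pz Px Pl.
case Pz: (P z).
  have [u [v [c1 Pu ruv Pv]]] := IH z pz Pz Pl.
  exists u, v; split=> //; apply: connect_trans c1; apply: connect1 => /=.
  by rewrite rxz Px Pz.
by exists x, z; rewrite Pz; split.
Qed.

Lemma path_all (r : rel T) (Q : pred T) x p :
  (forall u v, r u v -> Q v) -> path r x p -> all Q p.
Proof.
move=> H; elim: p x => //= z p IH x /andP[rxz pz].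
by rewrite (H _ _ rxz) (IH z pz).
Qed.

Lemma simple_path (r : rel T) x y : connect r x y ->
  exists p, [/\ path r x p, last x p = y & uniq (x :: p)].
Proof.
move=> /connectP[p pp ->]; case: (shortenP pp) => p' pp' up' _.
by exists p'.
Qed.

Lemma conn_closed (r : rel T) (S : pred T) x y :
  (forall u w, S u -> r u w -> S w) -> S x -> connect r x y -> S y.
Proof.
move=> H Sx /connectP[p pp ->]; elim: p x Sx pp => //= z p IH x Sx /andP[rxz pz].
exact: (IH z (H _ _ Sx rxz) pz).
Qed.

Lemma exists_max (P : nat -> Prop) b : (exists n, P n) -> (forall n, P n -> n <= b) ->
  exists m, P m /\ forall n, P n -> n <= m.
Proof.
elim: b => [|b IH] [n Pn] hb.
  by exists n; split=> // m Pm; exact: leq_trans (hb _ Pm) (leq0n n).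
case: (asboolP (P b.+1)) => [Pb|nPb].
  by exists b.+1.
apply: IH; first by exists n.
move=> m Pm; have := hb _ Pm; rewrite leq_eqVlt ltnS; case/orP=> // /eqP E.
by rewrite E in Pm.
Qed.

Variable e : rel T.

Lemma ins a s1 b s2 q :
  ucycle e (a :: s1 ++ b :: s2) -> q <> [::] -> uniq q ->
  {in q, forall y, y \notin a :: s1 ++ b :: s2} ->
  path e a q -> e (last a q) b -> ucycle e (a :: q ++ b :: s2).
Proof.
move=> /andP[cyc uC] qn uq qC pq eqb; apply/andP; split.
  move: cyc; rewrite /cycle -!cats1 -!catA !cat_path /=.
  by case/and4P=> _ /andP[_ ->] -> _; rewrite pq eqb.
move: uC; rewrite -[a :: s1 ++ _]/((a :: s1) ++ _) cat_uniq /= => /and3P[/andP[aC us1] hs u2].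
move: hs; rewrite negb_or => /andP[hb /hasPn hs2].
have u2' : uniq (b :: s2) by [].
have f1 : a \notin q by apply/negP=> aq; have := qC _ aq; rewrite inE eqxx.
have f2 : a \notin b :: s2.
  rewrite inE negb_or; apply/andP; split.
    by move: hb; rewrite inE negb_or eq_sym => /andP[].
  by apply/negP=> as2; have := hs2 _ as2; rewrite inE eqxx.
have f3 : ~~ has (mem q) (b :: s2).
  apply/hasPn=> y ys; apply/negP=> yq; have := qC _ yq.
  by rewrite inE mem_cat ys !orbT.
by rewrite mem_cat negb_or f1 f2 cat_uniq uq u2' f3.
Qed.

End Generic.



Ltac clia := repeat (match goal with H : _ |- _ => clear H end); lia.

Section LB.
Variables (T : finType) (e : rel T) (k : nat).
Hypotheses (esym : symmetric e) (hk : 2 <= k)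
  (hconn : forall X : {set T}, #|X| < k -> connected_outside e X).
Variable x : T.
Hypothesis hx : forall c, cummerbund e c -> x \notin c.

Definition er (C : seq T) : rel T := [rel u v | [&& e u v, u \notin C & v \notin C]].
Definition Comp C := [set v | connect (er C) x v].
Definition Att C := [set a | (a \in C) && [exists h, (h \in Comp C) && e a h]].

Lemma path_er C y p : path (er C) y p -> all (fun v => v \notin C) p.
Proof. by apply: path_all => u v /and3P[]. Qed.

Lemma comp_notin C v : x \notin C -> v \in Comp C -> v \notin C.
Proof.
move=> xC; rewrite inE => /connectP[p pp ->].
have := mem_last x p; rewrite inE => /orP[/eqP->//|].
by move/allP: (path_er pp); apply.
Qed.

Lemma er_sym C : symmetric (er C).
Proof. move=> u v; rewrite /er /= esym; by case: (u \in C); case: (v \in C); rewrite ?andbF. Qed.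

Lemma comp_connect C u v : u \in Comp C -> v \in Comp C -> connect (er C) u v.
Proof.
rewrite !inE => cu cv; apply: connect_trans cv.
by rewrite (sym_connect_sym (@er_sym C)).
Qed.

Lemma att_exists C (X : {set T}) v0 : x \notin C -> #|X| < k -> x \notin X ->
  v0 \notin X -> v0 \in C -> exists a, a \in Att C /\ a \notin X.
Proof.
move=> xC kX xX v0X v0C.
have := hconn kX xX v0X.
move/(exitP (P := fun v => v \notin C)) => /(_ xC); rewrite v0C => /(_ isT).
move=> [u [v [c1 Pu /and3P[euv uX vX] Pv]]].
exists v; split=> //; rewrite inE negbK in Pv *; rewrite Pv /=.
apply/existsP; exists u; rewrite esym euv andbT inE.
apply: connect_sub c1 => a b /= /andP[/and3P[eab _ _] /andP[aC bC]].
by apply: connect1; rewrite /er /= eab aC bC.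
Qed.

Lemma rotC C a : ucycle e C -> 3 <= size C -> a \in C ->
  exists m b s, [/\ ucycle e (a :: m :: b :: s), size (a :: m :: b :: s) = size C,
     (a :: m :: b :: s) =i C, next C a = m & next C m = b].
Proof.
move=> uc sz aC; have uC : uniq C by case/andP: uc.
case/rot_to: aC => i s' E.
have uc' : ucycle e (a :: s') by rewrite -E rot_ucycle.
have szE : size (a :: s') = size C by rewrite -E size_rot.
case: s' E uc' szE => [|m [|b s]] E uc' szE; first by rewrite -szE in sz.
  by rewrite -szE in sz.
exists m, b, s; split=> //.
- by move=> y; rewrite -E mem_rot.
- by rewrite -(next_rot i uC) E /= eqxx.
- have am : a != m by case/andP: uc' => _ /=; rewrite inE negb_or => /andP[/andP[]].
  by rewrite -(next_rot i uC) E /= eq_sym (negbTE am) eqxx.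
Qed.

Lemma step C : cummerbund e C ->
  3 * k <= size C \/ exists C', cummerbund e C' /\ #|Comp C'| < #|Comp C|.
Proof.
move=> cC; have xC := hx cC; case: cC => [[ucC szC] maxC].
have uC : uniq C by case/andP: ucC.
set N := Att C.
have NC : forall a, a \in N -> a \in C by move=> a; rewrite inE => /andP[].
have Nh : forall a, a \in N -> exists2 h, h \in Comp C & e a h.
  by move=> a; rewrite inE => /andP[_ /existsP[h /andP[]]]; exists h.
have qprops : forall h1 p, h1 \in Comp C -> path (er C) h1 p ->
   {in h1 :: p, forall y, y \notin C} /\ path e h1 p.
  move=> h1 p h1C pp; split.
    move=> y; rewrite inE => /orP[/eqP->|yp]; first exact: comp_notin.
    by move/allP: (path_er pp); apply.
  by apply: sub_path pp => u v /and3P[].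
have nextN : forall a, a \in N -> next C a \notin N.
  move=> a aN; apply/negP => mN.
  have [m [b [s [uc' sz' eqi na nm]]]] := rotC ucC szC (NC _ aN).
  rewrite na in mN.
  have [h1 h1C eah1] := Nh _ aN; have [h2 h2C emh2] := Nh _ mN.
  have [p [pp lp up]] := simple_path (comp_connect h1C h2C).
  have [qC pe] := qprops _ _ h1C pp.
  have uc2 : ucycle e (a :: (h1 :: p) ++ m :: b :: s).
    apply: (ins (s1 := [::])) => //.
    - by move=> y /qC; rewrite (eqi y).
    - by rewrite /= eah1.
    - by rewrite /= lp esym.
  have := maxC _ (conj uc2 _); rewrite -sz' /= !size_cat /=.
  by move=> H; have := H ltac:(clia); clia.
have [allg|] := boolP [forall a in N, next C (next C a) \notin N].
  left.
  have G2 : forall a, a \in N -> next C (next C a) \notin N by apply/forall_inP.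
  have [c0 c0C] : exists c0, c0 \in C by case: (C) szC => // c0 s _; exists c0; rewrite inE eqxx.
  have xN : x \notin N by apply/negP=> /NC; rewrite (negbTE xC).
  have [a0 [a0N _]] := att_exists (X := set0) xC ltac:(rewrite cards0; move: hk; clia) ltac:(by rewrite in_set0) ltac:(by rewrite in_set0) c0C.
  have kN : k <= #|N|.
    rewrite leqNgt; apply/negP=> lt.
    have [a [aN naN]] := att_exists xC lt xN (nextN _ a0N) ltac:(by rewrite mem_next NC).
    by rewrite aN in naN.
  pose f := fun (p : T * 'I_3) => iter p.2 (next C) p.1.
  have inj1 : injective (next C) := can_inj (prev_next uC).
  have finj : {in setX N [set: 'I_3] &, injective f}.
    move=> [a i] [b j] /setXP[aN _] /setXP[bN _]; rewrite /f /=.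
    case: i j => [[|[|[|i]]] Hi] [[|[|[|j]]] Hj] //= E.
    all: try (have Hij : Hi = Hj by apply: bool_irrelevance).
    - by rewrite E; subst.
    - by move: (nextN _ bN); rewrite -E aN.
    - by move: (G2 _ bN); rewrite -E aN.
    - by move: (nextN _ aN); rewrite E bN.
    - by rewrite (inj1 _ _ E); subst.
    - by move: (nextN _ bN); rewrite -(inj1 _ _ E) aN.
    - by move: (G2 _ aN); rewrite E bN.
    - by move: (nextN _ aN); rewrite (inj1 _ _ E) bN.
    - by rewrite (inj1 _ _ (inj1 _ _ E)); subst.
  have sub : f @: setX N [set: 'I_3] \subset [set v | v \in C].
    apply/subsetP=> y /imsetP[[a i] /setXP[aN _] ->]; rewrite inE /f /=.
    elim: (nat_of_ord i) => [|j IH] /=; first exact: NC.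
    by rewrite mem_next.
  have cardC : #|[set v | v \in C]| = size C by rewrite cardsE (card_uniqP uC).
  have := subset_leq_card sub; rewrite cardC (card_in_imset finj) cardsX cardsT card_ord.
  move=> H; move: H kN; clia.
move/forall_inPn => [a aN /negPn bN].
have [m [b [s [uc' sz' eqi na nm]]]] := rotC ucC szC (NC _ aN).
rewrite na nm in bN.
have [h1 h1C eah1] := Nh _ aN; have [h2 h2C ebh2] := Nh _ bN.
have [p [pp lp up]] := simple_path (comp_connect h1C h2C).
have [qC pe] := qprops _ _ h1C pp.
have uc2 : ucycle e (a :: (h1 :: p) ++ b :: s).
  apply: (ins (s1 := [:: m])) => //.
  - by move=> y /qC; rewrite (eqi y).
  - by rewrite /= eah1.
  - by rewrite /= lp esym.
case: p pp lp up qC pe uc2 => [|z p] pp lp up qC pe uc2; last first.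
  have := maxC _ (conj uc2 _); rewrite -sz' /= !size_cat /=.
  by move=> H; have := H ltac:(clia); clia.
rewrite /= in lp; subst h2.
set C2 := a :: ([:: h1] ++ b :: s).
have cC2 : cummerbund e C2.
  split; first by split=> //; rewrite /C2 /=; move: szC sz'; clia.
  by move=> c' /maxC; rewrite -sz'.
have xh : x != h1.
  apply/negP=> /eqP xh; move: (hx cC2); by rewrite /C2 xh !inE eqxx orbT.
have xC2 : x \notin C2.
  rewrite /C2 /= !inE !negb_or xh /=.
  by move: xC; rewrite -eqi !inE !negb_or => /and4P[-> _ -> ->].
right; exists C2; split=> //.
have sub : Comp C2 \subset Comp C :\ h1.
  apply/subsetP=> v vC2; rewrite in_setD1.
  apply/andP; split.
    apply/negP=> /eqP vh; move: (comp_notin xC2 vC2); by rewrite vh /C2 !inE eqxx orbT.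
  move: vC2; rewrite [v \in Comp C2]inE; apply: (conn_closed (S := fun v => v \in Comp C)).
  - move=> u w uC' /and3P[euw uC2 wC2].
    case wC: (w \in C).
      have wm : w = m.
        move: wC wC2; rewrite -eqi /C2 !inE !negb_or => /or4P[/eqP->|/eqP//|/eqP->|->].
        + by rewrite eqxx.
        + by rewrite eqxx /= !andbF.
        + by rewrite /= !andbF.
      have : m \in N.
        rewrite inE -wm wC /=; apply/existsP; exists u; by rewrite uC' esym.
      by rewrite -na (negbTE (nextN _ aN)).
    have uCn := comp_notin xC uC'; rewrite inE in uC' *.
    rewrite inE; apply: connect_trans uC' (connect1 _); by rewrite /er /= euw wC uCn.
  - by rewrite inE connect0.
have := subset_leq_card sub; rewrite (cardsD1 h1 (Comp C)) h1C => H; move: H; clia.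
Qed.

Lemma lb_size C : cummerbund e C -> 3 * k <= size C.
Proof.
move: {2}#|Comp C| (leqnn #|Comp C|) => n; elim: n C => [|n IH] C hn cC.
  case: (step cC) => // [[C' [_ lt]]]; lia.
case: (step cC) => // [[C' [cC' lt]]].
have := IH C' ltac:(lia) cC'.
have := cC'.2 _ cC.1; have := cC.2 _ cC'.1; lia.
Qed.

End LB.



Lemma cycle_exists (T : finType) (e : rel T) k :
  simple_graph e -> k_connected e k -> 2 <= k -> exists c, is_cycle e c.
Proof.
move=> [irr sym] [kn hc] hk.
have : 0 < #|T| by lia.
move/card_gt0P => [v _].
have [u evu] : exists u, e v u.
  have : 0 < #|[set~ v]| by rewrite cardsC1; lia.
  move/card_gt0P => [z]; rewrite !inE => zv.
  have := hc set0 ltac:(rewrite cards0; lia) v z ltac:(by rewrite in_set0) ltac:(by rewrite in_set0).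
  move/(exitP (P := pred1 v)) => /(_ (eqxx v) zv) [u0 [w [_ /eqP -> /and3P[evw _ _] _]]].
  by exists w.
have uv : u != v by apply/negP=> /eqP E; move: evu; rewrite E irr.
have [w [evw wu]] : exists w, e v w /\ w != u.
  have : 0 < #|[set~ u] :\ v|.
    have := cardsD1 v [set~ u]; rewrite cardsC1 !inE eq_sym uv /= => H; have h3 : 2 < #|T| by lia. move: H h3; move: #|T| => NN; lia.
  move/card_gt0P => [z]; rewrite !inE => /andP[zv zu].
  have := hc [set u] ltac:(rewrite cards1; lia) v z ltac:(by rewrite inE eq_sym) ltac:(by rewrite inE).
  move/(exitP (P := pred1 v)) => /(_ (eqxx v) zv) [u0 [w [_ /eqP -> /and3P[evw _ wX] _]]].
  by exists w; split=> //; rewrite inE in wX.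
have wv : w != v by apply/negP=> /eqP E; move: evw; rewrite E irr.
have := hc [set v] ltac:(rewrite cards1; lia) u w ltac:(by rewrite inE) ltac:(by rewrite inE).
move/simple_path => [p [pp lp up]].
exists (v :: u :: p); split; last first.
  by case: p pp lp up => [|z p] //= _ lp; move: wu; rewrite -lp eqxx.
apply/andP; split.
  rewrite /cycle rcons_cons /= evu rcons_path lp sym evw andbT.
  by apply: sub_path pp => a b /and3P[].
rewrite cons_uniq up andbT inE negb_or eq_sym uv /=.
have := path_all (Q := fun y => y \notin [set v]) _ pp.
move=> /(_ ltac:(by move=> a b /and3P[])) /allP H.
by apply/negP=> /H; rewrite inE eqxx.
Qed.

Lemma part1 (T : finType) (e : rel T) k : 2 <= k -> simple_graph e -> k_connected e k ->
  minn #|T| (3 * k) <= cc e.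
Proof.
move=> hk sg kc; have [irr sym] := sg; have [kn hc] := kc.
rewrite /cc; set L := [set v | _].
have [allL|] := boolP [forall v, v \in L].
  have -> : L = [set: T] by apply/setP=> v; rewrite in_setT; exact: (forallP allL v).
  by rewrite cardsT geq_minl.
move/forallPn => [x xL].
have hx : forall c, cummerbund e c -> x \notin c.
  move=> c cc; apply/negP=> xc; move: xL; rewrite inE; case: asboolP => //.
  by case; exists c.
have [c0 cyc0] := cycle_exists sg kc hk.
have bnd : forall c, is_cycle e c -> size c <= #|T|.
  by move=> c [/andP[_ uc] _]; rewrite -(card_uniqP uc) max_card.
have bndP : forall n, (exists c, is_cycle e c /\ size c = n) -> n <= #|T|.
  by move=> n [c [cy <-]]; exact: bnd.
have [m [[C [cC szC]] maxm]] := exists_max (P := fun m => exists c, is_cycle e c /\ size c = m)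
  (b := #|T|) (ex_intro _ _ (ex_intro _ c0 (conj cyc0 erefl))) bndP.
have cumC : cummerbund e C.
  by split=> // c' cy'; rewrite szC; apply: maxm; exists c'.
have := lb_size sym hk hc hx cumC.
have : #|[set v | v \in C]| <= #|L|.
  apply: subset_leq_card; apply/subsetP=> v; rewrite !inE => vC.
  by apply/asboolP; exists C.
have uC : uniq C by case: cC => /andP[]. rewrite cardsE (card_uniqP uC) => H1 H2.
by rewrite geq_min; apply/orP; right; lia.
Qed.



Lemma path_neq (T : eqType) (x : T) p : uniq (x :: p) -> path (fun i j => i != j) x p.
Proof.
elim: p x => //= y p IH x /andP[]; rewrite inE negb_or => /andP[xy xp] /andP[yp up].
by rewrite xy IH //= yp up.
Qed.

Lemma cycle_neq (T : eqType) (s : seq T) : uniq s -> 2 <= size s -> cycle (fun i j => i != j) s.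
Proof.
case: s => // x p us sz; rewrite /cycle rcons_path path_neq //=.
move: us => /= /andP[xp _].
apply/negP=> /eqP E; case: p sz xp E => // y p _ xp E.
move: E => /= E; by move: (mem_last y p); rewrite E => H; rewrite H in xp.
Qed.

Lemma Kn_part (n k : nat) : 2 <= k -> k + 1 <= n ->
  simple_graph (fun i j : 'I_n => i != j) /\ k_connected (fun i j : 'I_n => i != j) k /\
  cc (fun i j : 'I_n => i != j) = n.
Proof.
move=> hk hn; split; first by split; [move=> i; rewrite eqxx | move=> i j; rewrite eq_sym].
split.
  split; first by rewrite card_ord; lia.
  move=> X _ u v uX vX; case: (eqVneq u v) => [->|uv]; first exact: connect0.
  by apply: connect1; rewrite /= uv uX vX.
have cE : is_cycle (fun i j : 'I_n => i != j) (enum 'I_n).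
  split; last by rewrite size_enum_ord; lia.
  by apply/andP; split; [apply: cycle_neq; [apply: enum_uniq | rewrite size_enum_ord; lia] | apply: enum_uniq].
rewrite /cc; set L := [set v | _].
have -> : L = [set: 'I_n].
  apply/setP=> v; rewrite in_setT inE; apply/asboolP; exists (enum 'I_n); split; last by rewrite mem_enum.
  split=> // c' [/andP[_ uc] _]; rewrite size_enum_ord -(card_uniqP uc).
  by apply: leq_trans (max_card _) _; rewrite card_ord.
by rewrite cardsT card_ord.
Qed.



Lemma next_neq_prev (T : eqType) (c : seq T) v : uniq c -> 3 <= size c -> v \in c ->
  next c v != prev c v.
Proof.
move=> uc sz vc; apply/negP=> /eqP E.
have nn : next c (next c v) = v by rewrite {1}E next_prev.
case/rot_to: vc => i s' R.
have szE : size (v :: s') = size c by rewrite -R size_rot.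
have uc' : uniq (v :: s') by rewrite -R rot_uniq.
case: s' R szE uc' => [|w [|u s]] R szE uc'; try by rewrite -szE in sz.
have h1 : next c v = w by rewrite -(next_rot i uc) R /= eqxx.
have vw : v != w by move: uc'; rewrite /= inE negb_or => /andP[/andP[]].
have h2 : next c w = u by rewrite -(next_rot i uc) R /= eq_sym (negbTE vw) eqxx.
move: nn; rewrite h1 h2 => uv; move: uc'; by rewrite uv /= !inE eqxx orbT.
Qed.

Lemma count_le (T : eqType) (s : seq T) (P1 P2 Q1 Q2 : pred T) :
  (forall v, v \in s -> P1 v + P2 v <= Q1 v + Q2 v) ->
  count P1 s + count P2 s <= count Q1 s + count Q2 s.
Proof.
elim: s => //= x s IH H.
have := H x (mem_head _ _); have := IH (fun v vs => H v ltac:(by rewrite inE vs orbT)); lia.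
Qed.

Lemma count_nextP (T : eqType) (c : seq T) (P : pred T) : uniq c ->
  count (fun v => P (next c v)) c = count P c.
Proof.
move=> uc; rewrite -[count (fun v => _) c]/(count (preim (next c) P) c) -count_map.
apply/permP; apply: uniq_perm => //.
  by rewrite (map_inj_uniq (can_inj (prev_next uc))).
move=> y; apply/mapP/idP => [[z zc ->]|yc]; first by rewrite mem_next.
by exists (prev c y); rewrite ?mem_prev // next_prev.
Qed.

Lemma count_prevP (T : eqType) (c : seq T) (P : pred T) : uniq c ->
  count (fun v => P (prev c v)) c = count P c.
Proof.
move=> uc; rewrite -[count (fun v => _) c]/(count (preim (prev c) P) c) -count_map.
apply/permP; apply: uniq_perm => //.
  by rewrite (map_inj_uniq (can_inj (next_prev uc))).
move=> y; apply/mapP/idP => [[z zc ->]|yc]; first by rewrite mem_prev.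
by exists (next c y); rewrite ?mem_next // prev_next.
Qed.

Lemma last_iota x a m : last x (iota a m.+1) = a + m.
Proof.
elim: m a x => [|m IH] a x; first by rewrite /= addn0.
have -> : iota a m.+2 = a :: iota a.+1 m.+1 by [].
rewrite last_cons IH; lia.
Qed.

Lemma path_iota (r : rel nat) a m : (forall i, a <= i < a + m -> r i i.+1) ->
  path r a (iota a.+1 m).
Proof.
elim: m a => //= m IH a H; rewrite H; last by lia.
by apply: IH => i hi; apply: H; lia.
Qed.

Section Constr.
Variables (n k : nat).
Hypotheses (hk : 2 <= k) (hn : 3 * k < n.+1).

Definition isA (i : nat) := (i < 3 * k) && (i %% 3 == 0).
Definition rn (i j : nat) :=
  (i != j) && [|| isA i, isA j | [&& i < 3 * k, j < 3 * k & i %/ 3 == j %/ 3]].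
Definition econ : rel 'I_n.+1 := fun i j => rn i j.

Lemma rn_sym : symmetric rn.
Proof.
move=> i j; rewrite /rn eq_sym [j %/ 3 == _]eq_sym.
by case: (isA i); case: (isA j); case: (i < 3 * k); case: (j < 3 * k).
Qed.

Lemma econ_simple : simple_graph econ.
Proof. by split; [move=> i; rewrite /econ /rn eqxx | move=> i j; exact: rn_sym]. Qed.

Definition fA (t : 'I_k) : 'I_n.+1 := inord (3 * t).

Lemma fA_inj : injective fA.
Proof.
move=> s t /(congr1 (@nat_of_ord _)); rewrite /fA !inordK; try (have := ltn_ord s; have := ltn_ord t; lia).
move=> E; apply: val_inj => /=; lia.
Qed.

Lemma setA_E : [set v : 'I_n.+1 | isA v] = fA @: setT.
Proof.
apply/setP=> v; rewrite inE; apply/idP/imsetP => [/andP[v3 v0]|[t _ ->]].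
  have lt : v %/ 3 < k by lia.
  exists (Ordinal lt) => //; apply: val_inj; rewrite /fA /= inordK; lia.
rewrite /isA /fA inordK; have := ltn_ord t; lia.
Qed.

Lemma card_A : #|[set v : 'I_n.+1 | isA v]| = k.
Proof. by rewrite setA_E card_imset ?cardsT ?card_ord //; apply: fA_inj. Qed.

Lemma econ_kconn : k_connected econ k.
Proof.
split; first by rewrite card_ord; lia.
move=> X hX u v uX vX.
have [a aA aX] : exists2 a, a \in [set v : 'I_n.+1 | isA v] & a \notin X.
  apply/exists_inP; rewrite -negb_forall_in; apply/negP=> /forall_inP H.
  have : [set v : 'I_n.+1 | isA v] \subset X by apply/subsetP=> y /H; rewrite ?negbK.
  by move/subset_leq_card; rewrite card_A; lia.
rewrite inE in aA.
have ca : forall w, w \notin X ->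
    connect [rel x y | [&& econ x y, x \notin X & y \notin X]] w a.
  move=> w wX; case: (eqVneq w a) => [->|wa]; first exact: connect0.
  apply: connect1; rewrite /= wX aX /econ /rn aA orbT !andbT.
  by apply: contra wa => /eqP E; apply/eqP; apply: val_inj.
apply: connect_trans (ca _ uX) _.
rewrite (sym_connect_sym (e := [rel x y | [&& econ x y, x \notin X & y \notin X]])).
  exact: ca.
move=> x y /=; rewrite /econ rn_sym.
by case: (x \in X); case: (y \in X); rewrite ?andbF.
Qed.

Lemma cyc_bound c : ucycle econ c -> 3 <= size c ->
  size c + count (fun v : 'I_n.+1 => 3 * k <= v) c <= 3 * k.
Proof.
move=> /andP[cyc uc] sz.
pose pA : pred 'I_n.+1 := fun v => isA v.
pose pI : pred 'I_n.+1 := fun v => 3 * k <= v.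
have cA : count pA c <= k.
  rewrite -size_filter -(card_uniqP (filter_uniq _ uc)) -card_A.
  by apply: subset_leq_card; apply/subsetP=> y; rewrite mem_filter inE => /andP[].
have key := count_le (s := c) (P1 := predC pA) (P2 := pI)
  (Q1 := fun v => pA (next c v)) (Q2 := fun v => pA (prev c v)).
rewrite (count_nextP pA uc) (count_prevP pA uc) in key.
change (size c + count pI c <= 3 * k).
have := count_predC pA c.
suff H : forall v, v \in c -> (predC pA v) + (pI v) <= pA (next c v) + pA (prev c v).
  have := key H; set a1 := count pA c; set a2 := count (predC pA) c; set a3 := count pI c; set a4 := size c; lia.
rewrite /pA /pI.
move=> v vc /=.
have en : rn v (next c v) := next_cycle cyc vc.
have ep : rn v (prev c v) by rewrite rn_sym; exact: (prev_cycle cyc vc).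
case Av: (isA v) => /=.
  by move: Av; rewrite /isA => /andP[lt _]; rewrite [3 * k <= v]leqNgt lt.
case: (leqP (3 * k) v) => hv /=.
  move: en ep; rewrite /rn Av /= [v < 3 * k]ltnNge hv /= ?andbF ?orbF.
  by move=> /andP[_ ->] /andP[_ ->].
case An: (isA (next c v)); first by rewrite add1n.
case Ap: (isA (prev c v)); first by [].
exfalso; move: en ep; rewrite /rn Av An Ap hv /=.
move=> /andP[n1 /andP[n2 n3]] /andP[p1 /andP[p2 p3]].
have := next_neq_prev uc sz vc; apply/negP; rewrite negbK.
move: Av An Ap; rewrite /isA hv n2 p2 /= => Av An Ap.
apply/eqP; apply: val_inj; apply/eqP; move: Av An Ap n1 p1 n3 p3; rewrite /=.
move=> *; apply/eqP; lia.
Qed.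

Definition C0 : seq 'I_n.+1 := [seq inord i | i <- iota 0 (3 * k)].

Lemma C0_cycle : is_cycle econ C0.
Proof.
have sz : size C0 = 3 * k by rewrite size_map size_iota.
split; last by rewrite sz; lia.
apply/andP; split.
  rewrite /C0 cycle_map.
  rewrite (eq_in_cycle (P := fun i => i < 3 * k) (e' := rn)).
  - have [m hm] : exists m, 3 * k = m.+2 by exists (3 * k).-2; lia.
    rewrite hm; change (path rn 0 (rcons (iota 1 m.+1) 0)).
    rewrite rcons_path last_iota add1n.
    apply/andP; split.
      apply: path_iota => i hi; rewrite /rn /isA.
      apply/andP; split; first by lia.
      apply/orP; case: (eqVneq (i %% 3) 0) => h; first by left; apply/andP; split; lia.
      right; apply/orP.
      case: (eqVneq (i %% 3) 1) => h1.
        by right; apply/and3P; split; lia.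
      by left; apply/andP; split; lia.
    rewrite /rn /isA; apply/andP; split; first by lia.
    by apply/orP; right; apply/orP; left; apply/andP; split; lia.
  - move=> i j hi hj /=; move: hi hj; rewrite !unfold_in /= => hi hj.
    have hi2 : i < n.+1 by lia.
    have hj2 : j < n.+1 by lia.
    by rewrite /econ (inordK hi2) (inordK hj2).
  - by apply/allP=> i; rewrite mem_iota.
rewrite map_inj_in_uniq ?iota_uniq //.
move=> i j; rewrite !mem_iota => hi hj /(congr1 (@nat_of_ord _)); rewrite !inordK //; lia.
Qed.

Lemma constr_cc : cc econ = 3 * k.
Proof.
have sz : size C0 = 3 * k by rewrite size_map size_iota.
have cum : cummerbund econ C0.
  split; first exact: C0_cycle.
  move=> c' [uc' sz']; rewrite sz; exact: leq_trans (leq_addr _ _) (cyc_bound uc' sz').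
rewrite /cc; set L := [set v | _].
have -> : L = [set v | v \in C0].
  apply/setP=> v; rewrite !inE; apply/asboolP/idP => [[c [[[uc szc] mx] vc]]|vC].
    have := cyc_bound uc szc; have := mx _ C0_cycle; rewrite sz => h1 h2.
    have : count (fun v : 'I_n.+1 => 3 * k <= v) c = 0.
      by apply/eqP; rewrite -leqn0 -(leq_add2l (size c)) addn0; exact: leq_trans h2 h1.
    move/eqP; rewrite -leqn0 leqNgt -has_count => /hasPn /(_ v vc).
    rewrite -ltnNge => lt; apply/mapP; exists (val v); first by rewrite mem_iota.
    by rewrite inord_val.
  by exists C0.
have uC0 : uniq C0 by case: C0_cycle => /andP[]. 
by rewrite cardsE (card_uniqP uC0) sz.
Qed.

End Constr.


Theorem theorem7 (k n : nat) (hk : 2 <= k) (hn : k + 1 <= n) :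
  (forall (T : finType) (e : rel T),
      simple_graph e -> #|T| = n -> k_connected e k ->
      minn n (3 * k) <= cc e)
  /\
  (exists e : rel 'I_n,
      simple_graph e /\ k_connected e k /\ cc e = minn n (3 * k)).
Proof.
split.
  by move=> T e sg hT kc; rewrite -hT; exact: part1.
case: (leqP n (3 * k)) => h.
  exists (fun i j : 'I_n => i != j); exact: (Kn_part hk hn).
case: n hn h => [|n'] hn h; first by lia.
exists (@econ n' k); split; first exact: econ_simple.
split; first exact: econ_kconn.
exact: (constr_cc hk h).
Qed.
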